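(* Let $\gamma_a,\gamma_s>0$, $\sigma_B>0$, $q>0$, $\lambda>0$, $\varepsilon_a\in(0,2)$, and let $\beta_s$ be the piecewise linear coalbedo described in the context. Then the system \[ \gamma_a T_a'=-\lambda(T_a-T_s)+\varepsilon_a\sigma_B|T_s|^3T_s-2\varepsilon_a\sigma_B|T_a|^3T_a,\qquad \gamma_s T_s'=-\lambda(T_s-T_a)-\sigma_B|T_s|^3T_s+\varepsilon_a\sigma_B|T_a|^3T_a+q\beta_s(T_s) \] has at most finitely many equilibrium points.
   Context: The coalbedo is $\beta_s(T)=\beta_{s,-}$ for $T\le T_{s,-}$, $\beta_s(T)=\beta_{s,-}+(\beta_{s,+}-\beta_{s,-})\frac{T-T_{s,-}}{T_{s,+}-T_{s,-}}$ for $T\in[T_{s,-},T_{s,+}]$, and $\beta_s(T)=\beta_{s,+}$ for $T\ge T_{s,+}$, where $T_{s,+}>T_{s,-}>0$ and $\beta_{s,+}>\beta_{s,-}>0$. An equilibrium point is a point $(T_a,T_s)\in[0,\infty)^2$ at which both right-hand sides vanish. *)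

(* Defs.v *)
From Stdlib Require Import Reals List.
Open Scope R_scope.

Definition coalbedo (Tm Tp bm bp T : R) : R :=
  if Rle_dec T Tm then bm
  else if Rle_dec Tp T then bp
  else bm + (bp - bm) * (T - Tm) / (Tp - Tm).

Definition rhs_a (sigmaB lam eps_a Ta Ts : R) : R :=
  - lam * (Ta - Ts) + eps_a * sigmaB * (Rabs Ts ^ 3 * Ts)
  - 2 * eps_a * sigmaB * (Rabs Ta ^ 3 * Ta).

Definition rhs_s (sigmaB q lam eps_a Tm Tp bm bp Ta Ts : R) : R :=
  - lam * (Ts - Ta) - sigmaB * (Rabs Ts ^ 3 * Ts)
  + eps_a * sigmaB * (Rabs Ta ^ 3 * Ta) + q * coalbedo Tm Tp bm bp Ts.

Definition is_equilibrium (sigmaB q lam eps_a Tm Tp bm bp Ta Ts : R) : Prop :=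
  0 <= Ta /\ 0 <= Ts /\
  rhs_a sigmaB lam eps_a Ta Ts = 0 /\
  rhs_s sigmaB q lam eps_a Tm Tp bm bp Ta Ts = 0.

(* Main.v *)
Require Import Defs.
From Stdlib Require Import Reals List Lra.
From mathcomp Require Import all_boot all_algebra.
From mathcomp Require Import Rstruct.
Import GRing.Theory.

Section P.
Local Open Scope ring_scope.

Lemma roots_list (p : {poly R}) : p != 0 ->
  exists l : list R, forall x, root p x -> List.In x l.
Proof.
move: {2}(size p) (leqnn (size p)) => n; elim: n p => [|n IH] p Hs Hp.
  by move: Hp; rewrite -size_poly_eq0; move: Hs; case: (size p).
have [[a Ha]|Hn] := Classical_Prop.classic (exists a, root p a); last first.
  by exists nil => x Hx; apply: Hn; exists x.
move/factor_theorem: Ha => [q Hq].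
have Hq0 : q != 0 by apply: contraNneq Hp => Hq0; rewrite Hq Hq0 mul0r.
have Hsq : (size q <= n)%N.
  move: Hs; rewrite Hq size_mul // ?polyXsubC_eq0 // size_XsubC addnS /=.
  by rewrite addn1 ltnS.
have [l Hl] := IH q Hsq Hq0.
exists (a :: l) => x; rewrite Hq rootM root_XsubC => /orP [/Hl H|/eqP ->].
  by right. by left.
Qed.

Definition Qp (A B C : R) : {poly R} := A *: 'X^4 + (B *: 'X + C%:P).
Definition Pp (A B C D E F G : R) : {poly R} :=
  D *: (Qp A B C) ^+ 4 - (E *: 'X^4 + (F *: 'X + G%:P)).

Lemma size_small (E F G : R) : (size (E *: 'X^4 + (F *: 'X + G%:P) : {poly R})%R <= 5)%N.
Proof.
apply: leq_trans (size_polyD _ _) _; rewrite geq_max; apply/andP; split.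
  by apply: leq_trans (size_scale_leq _ _) _; rewrite size_polyXn.
apply: leq_trans (size_polyD _ _) _; rewrite geq_max; apply/andP; split.
  by apply: leq_trans (size_scale_leq _ _) _; rewrite size_polyX.
by apply: leq_trans (size_polyC_leq1 _) _.
Qed.

Lemma Pp_neq0 A B C D E F G : A != 0 -> D != 0 -> Pp A B C D E F G != 0.
Proof.
move=> HA HD.
have HQ : size (Qp A B C) = 5%N.
  rewrite /Qp size_polyDl (size_scale _ HA) ?size_polyXn //.
  apply: leq_ltn_trans (size_polyD _ _) _.
  rewrite gtn_max; apply/andP; split.
    by apply: leq_ltn_trans (size_scale_leq _ _) _; rewrite size_polyX.
  by apply: leq_ltn_trans (size_polyC_leq1 _) _.
have HQ4 : size ((Qp A B C) ^+ 4) = 17%N.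
  have := size_exp (Qp A B C) 4; rewrite HQ /=.
  by case: (size (Qp A B C ^+ 4)) => //= n ->.
rewrite -size_poly_eq0 /Pp size_polyDl.
  by rewrite size_scale // HQ4.
by rewrite size_polyN size_scale // HQ4; apply: leq_ltn_trans (size_small _ _ _) _.
Qed.

Lemma Pp_horner A B C D E F G t : (Pp A B C D E F G).[t] =
  D * (A * t ^+ 4 + (B * t + C)) ^+ 4 - (E * t ^+ 4 + (F * t + G)).
Proof. by rewrite /Pp /Qp !hornerE. Qed.

End P.
Local Open Scope R_scope.

Lemma poly_roots_finite (A B C D E F G : R) : A <> 0 -> D <> 0 ->
  exists l : list R, forall t,
    D * (A * t^4 + (B * t + C))^4 - (E * t^4 + (F * t + G)) = 0 -> In t l.
Proof.
move=> /eqP HA /eqP HD.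
have [l Hl] := @roots_list _ (Pp_neq0 A B C D E F G HA HD).
exists l => t Ht; apply: Hl.
rewrite /root Pp_horner -!RpowE; apply/eqP; exact: Ht.
Qed.

Open Scope R_scope.
Lemma piece sB q lam e a b : 0<sB -> 0<lam -> 0<e<2 -> exists l, forall Ta Ts,
  0<=Ta -> 0<=Ts -> rhs_a sB lam e Ta Ts = 0 ->
  -lam*(Ts-Ta) - sB*(Rabs Ts^3*Ts) + e*sB*(Rabs Ta^3*Ta) + q*(a+b*Ts) = 0 -> In Ts l.
Proof.
intros HsB Hlam He.
assert (HA : (2-e)*sB/lam <> 0).
{ apply Rgt_not_eq. apply Rdiv_lt_0_compat; [apply Rmult_lt_0_compat|]; lra. }
assert (HD : e*sB <> 0) by (apply Rgt_not_eq; apply Rmult_lt_0_compat; lra).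
destruct (poly_roots_finite ((2-e)*sB/lam) (1 - 2*q*b/lam) (- (2*q*a/lam)) (e*sB)
  ((e-1)*sB) (q*b) (q*a) HA HD) as [l Hl].
exists l. intros Ta Ts HTa HTs H1 H2. apply Hl.
unfold rhs_a in H1. rewrite (Rabs_pos_eq Ta HTa) (Rabs_pos_eq Ts HTs) in H1 H2.
assert (E1 : lam*Ta = lam*Ts + (2-e)*sB*Ts^4 - 2*q*(a+b*Ts)) by lra.
assert (E2 : Ta = (2-e)*sB/lam*Ts^4 + ((1 - 2*q*b/lam)*Ts + - (2*q*a/lam))).
{ apply Rmult_eq_reg_l with lam; [|lra]. rewrite E1. field. lra. }
rewrite <- E2. lra.
Qed.

Theorem lemma6p2 (gamma_a gamma_s sigmaB q lam eps_a Tm Tp bm bp : R)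
  (hga : 0 < gamma_a) (hgs : 0 < gamma_s) (hsB : 0 < sigmaB)
  (hq : 0 < q) (hlam : 0 < lam) (heps : 0 < eps_a < 2)
  (hT : 0 < Tm < Tp) (hb : 0 < bm < bp) :
  exists l : list (R * R),
    forall Ta Ts : R,
      is_equilibrium sigmaB q lam eps_a Tm Tp bm bp Ta Ts -> In (Ta, Ts) l.
Proof.
pose (k := (bp-bm)/(Tp-Tm)).
destruct (piece sigmaB q lam eps_a bm 0 hsB hlam heps) as [l1 H1].
destruct (piece sigmaB q lam eps_a bp 0 hsB hlam heps) as [l2 H2].
destruct (piece sigmaB q lam eps_a (bm - k*Tm) k hsB hlam heps) as [l3 H3].
exists (map (fun t => ((lam*t + (2-eps_a)*sigmaB*t^4 - 2*q*coalbedo Tm Tp bm bp t)/lam, t))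
  (l1++l2++l3)).
intros Ta Ts [HTa [HTs [E1 E2]]].
assert (HTa' : Ta = (lam*Ts + (2-eps_a)*sigmaB*Ts^4 - 2*q*coalbedo Tm Tp bm bp Ts)/lam).
{ unfold rhs_a in E1; unfold rhs_s in E2.
  rewrite (Rabs_pos_eq Ta HTa) (Rabs_pos_eq Ts HTs) in E1 E2.
  apply Rmult_eq_reg_l with lam; [|lra]. field_simplify; [|lra]. lra. }
rewrite {1}HTa'.
apply (in_map (fun t => ((lam*t + (2-eps_a)*sigmaB*t^4 - 2*q*coalbedo Tm Tp bm bp t)/lam, t))).
unfold rhs_s, coalbedo in E2.
destruct (Rle_dec Ts Tm).
- apply in_or_app; left. apply H1 with Ta; auto. lra.
- destruct (Rle_dec Tp Ts).
  + apply in_or_app; right; apply in_or_app; left. apply H2 with Ta; auto. lra.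
  + apply in_or_app; right; apply in_or_app; right. apply H3 with Ta; auto.
    assert (Hk : bm + (bp-bm)*(Ts-Tm)/(Tp-Tm) = (bm-k*Tm)+k*Ts) by (unfold k; field; lra).
    rewrite Hk in E2. lra.
Qed.
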